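(* Fix $\vartheta_1\in(0,\pi/2)$ and an integer $k\ge0$. Let $\eta_k$ be the unique solution of $\tan\eta=\eta$ in $k\pi\le\eta<k\pi+\pi/2$, and set $\eta_k'=\eta_k-k\pi$. (1) If $\vartheta_1<\eta_k'$, then on $I_k$ the function $\Phi$ decreases from $\Phi(\vartheta_1+k\pi)=k\pi$ to $\Phi(\eta_k)\ge0$ and then increases to $\Phi((k+1)\pi-\vartheta_1)=(k+1)\pi$. (2) If $\vartheta_1\ge\eta_k'$, then $\Phi$ increases on $I_k$ from $\Phi(\vartheta_1+k\pi)=k\pi$ to $\Phi((k+1)\pi-\vartheta_1)=(k+1)\pi$.
   Context: For integers $k\ge0$ let $I_k=[\vartheta_1+k\pi,(k+1)\pi-\vartheta_1]$. For $\eta\in I_k$ set $\gamma(\eta)=\sqrt{1-\sin^2\vartheta_1/\sin^2\eta}$ and $$\Phi(\eta)=-\eta\,\gamma(\eta)+k\pi+\arccos\Big(\frac{\cos(\eta-k\pi)}{\cos\vartheta_1}\Big),\qquad\arccos\in[0,\pi].$$ *)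

(* Defs.v *)
From Stdlib Require Import Reals Lra.
Open Scope R_scope.

Definition gam (theta1 eta : R) : R :=
  sqrt (1 - (sin theta1)^2 / (sin eta)^2).

Definition Phi (theta1 : R) (k : nat) (eta : R) : R :=
  - eta * gam theta1 eta + INR k * PI
  + acos (cos (eta - INR k * PI) / cos theta1).

Definition Ik (theta1 : R) (k : nat) (eta : R) : Prop :=
  theta1 + INR k * PI <= eta <= (INR k + 1) * PI - theta1.

(* Main.v *)
Require Import Defs.
From Stdlib Require Import Reals Lra Psatz.
From Coquelicot Require Import Coquelicot.
Open Scope R_scope.

Lemma incr_lemma (f f' : R -> R) a b :
  (forall x, a < x < b -> derivable_pt_lim f x (f' x)) ->
  (forall x, a < x < b -> 0 < f' x) ->
  (forall x, a <= x <= b -> continuity_pt f x) ->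
  forall x y, a <= x -> x < y -> y <= b -> f x < f y.
Proof.
  intros Hd Hp Hc x y Hx Hxy Hy.
  assert (pr1 : forall c, x < c < y -> derivable_pt f c).
  { intros c Hc'; exists (f' c); apply Hd; lra. }
  assert (pr2 : forall c, x < c < y -> derivable_pt id c).
  { intros; apply derivable_pt_id. }
  destruct (MVT f id x y pr1 pr2 Hxy) as [c [P HP]].
  - intros; apply Hc; lra.
  - intros; apply derivable_continuous_pt, derivable_pt_id.
  - rewrite (derive_pt_eq_0 id c 1 (pr2 c P)) in HP by apply derivable_pt_lim_id.
    rewrite (derive_pt_eq_0 f c (f' c) (pr1 c P)) in HP by (apply Hd; lra).
    unfold id in HP. assert (0 < f' c) by (apply Hp; lra). nra.
Qed.

Lemma acos_cont_pos x : 0 < x -> continuous acos x.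
Proof.
  intros Hx. apply continuity_pt_filterlim.
  apply (continuity_pt_locally_ext (fun y => atan (sqrt (1 - y²) / y)) acos x x Hx).
  { intros y Hy. unfold Rdist in Hy. rewrite acos_atan; auto.
    apply Rabs_def2 in Hy. lra. }
  apply continuity_pt_filterlim.
  apply (continuous_atan_comp (fun y => sqrt (1 - y²) / y)).
  apply (continuous_mult (fun y => sqrt (1 - y²)) (fun y => / y)).
  - apply continuous_sqrt_comp.
    apply (continuous_plus (fun _ => 1) (fun y => - y²)).
    + apply continuous_const.
    + apply (continuous_opp (fun y => y²)). unfold Rsqr.
      apply (continuous_mult (K:=R_AbsRing) (fun y:R => y) (fun y:R => y)); apply continuous_id.
  - apply continuous_Rinv; lra.
Qed.

Lemma acos_cont x : continuous acos x.
Proof.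
  destruct (Rtotal_order x 0) as [Hn|[H0|Hp]].
  - apply continuous_ext_loc with (fun y => PI + - acos (- y)).
    { apply filter_forall. intros y. simpl.
      replace (acos y) with (acos (- - y)) by (rewrite Ropp_involutive; auto).
      rewrite (acos_opp (-y)). ring. }
    apply (continuous_plus (fun _ => PI) (fun y => - acos (-y))).
    + apply continuous_const.
    + apply (continuous_opp (fun y => acos (-y))).
      apply (continuous_comp (fun y => - y) acos).
      * apply (continuous_opp (V:=R_NormedModule) (fun y:R => y)); apply continuous_id.
      * apply acos_cont_pos; lra.
  - apply continuity_pt_filterlim. apply derivable_continuous_pt.
    apply derivable_pt_acos; lra.
  - apply acos_cont_pos; auto.
Qed.

Lemma sin_k k x : sin (x + INR k * PI) = (-1)^k * sin x.
Proof.
  induction k.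
  - simpl. rewrite Rmult_0_l, Rplus_0_r. ring.
  - rewrite S_INR. replace (x + (INR k + 1) * PI) with ((x + INR k * PI) + PI) by ring.
    rewrite neg_sin, IHk. simpl. ring.
Qed.

Lemma cos_k k x : cos (x + INR k * PI) = (-1)^k * cos x.
Proof.
  induction k.
  - simpl. rewrite Rmult_0_l, Rplus_0_r. ring.
  - rewrite S_INR. replace (x + (INR k + 1) * PI) with ((x + INR k * PI) + PI) by ring.
    rewrite neg_cos, IHk. simpl. ring.
Qed.

Lemma sinsq_k k x : sin (x + INR k * PI) ^ 2 = sin x ^ 2.
Proof. rewrite sin_k. rewrite Rpow_mult_distr, <- pow_mult.
  replace (k * 2)%nat with (2 * k)%nat by lia. rewrite pow_mult.
  replace ((-1)^2) with 1 by ring. rewrite pow1. ring. Qed.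

Lemma tan_k k x : cos x <> 0 -> tan (x + INR k * PI) = tan x.
Proof. intros H. unfold tan. rewrite sin_k, cos_k. field. split; auto.
  apply pow_nonzero. lra. Qed.

Lemma F_incr x y : 0 <= x -> x < y -> y < PI/2 -> tan x - x < tan y - y.
Proof.
  intros Hx Hxy Hy.
  apply (incr_lemma (fun u => tan u - u) (fun u => (tan u)^2) x y); try lra.
  - intros u Hu. assert (cos u > 0) by (apply cos_gt_0; lra).
    apply is_derive_Reals. unfold tan. auto_derive. lra.
    field. lra.
  - intros u Hu. assert (0 < tan u) by (apply tan_gt_0; lra). nra.
  - intros u Hu. assert (cos u > 0) by (apply cos_gt_0; lra).
    apply continuity_pt_filterlim.
    apply (continuous_plus (V:=R_NormedModule) tan (fun u:R => - u)).
    + apply continuous_tan; lra.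
    + apply (continuous_opp (V:=R_NormedModule) (fun y:R => y)); apply continuous_id.
Qed.

Definition hh (t1 K u : R) :=
  -(u+K) * sqrt (1 - (sin t1)^2/(sin u)^2) + K + acos (cos u / cos t1).

Lemma Phi_hh t1 k eta : Phi t1 k eta = hh t1 (INR k * PI) (eta - INR k * PI).
Proof.
  unfold Phi, hh, gam.
  assert (E : sin eta ^ 2 = sin (eta - INR k * PI) ^ 2).
  { rewrite <- (sinsq_k k (eta - INR k * PI)). f_equal. f_equal. ring. }
  rewrite E. replace (eta - INR k * PI + INR k * PI) with eta by ring. reflexivity.
Qed.

Lemma hh_cont t1 K u : sin u <> 0 -> continuity_pt (hh t1 K) u.
Proof.
  intros Hs. apply continuity_pt_filterlim. unfold hh.
  apply (continuous_plus (V:=R_NormedModule)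
    (fun u => -(u+K) * sqrt (1 - (sin t1)^2/(sin u)^2) + K) (fun u => acos (cos u / cos t1))).
  - apply (continuous_plus (V:=R_NormedModule)
      (fun u => -(u+K) * sqrt (1 - (sin t1)^2/(sin u)^2)) (fun _ => K)).
    + apply (continuous_mult (K:=R_AbsRing) (fun u:R => -(u+K)) (fun u => sqrt (1 - (sin t1)^2/(sin u)^2))).
      * apply (continuous_opp (V:=R_NormedModule) (fun u:R => u + K)).
        apply (continuous_plus (V:=R_NormedModule) (fun u:R => u) (fun _ => K)).
        apply continuous_id. apply continuous_const.
      * apply continuous_sqrt_comp.
        apply (continuous_plus (V:=R_NormedModule) (fun _ => 1) (fun u => - ((sin t1)^2/(sin u)^2))).
        apply continuous_const.
        apply (continuous_opp (V:=R_NormedModule) (fun u => ((sin t1)^2/(sin u)^2))).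
        apply (continuous_mult (K:=R_AbsRing) (fun _ => (sin t1)^2) (fun u => / (sin u)^2)).
        apply continuous_const.
        apply continuous_Rinv_comp.
        simpl. apply (continuous_mult (K:=R_AbsRing) (fun u => sin u) (fun u => sin u * 1)).
        apply continuous_sin.
        apply (continuous_mult (K:=R_AbsRing) (fun u => sin u) (fun u => 1)).
        apply continuous_sin. apply continuous_const.
        simpl. rewrite Rmult_1_r. intro H. apply Hs. nra.
    + apply continuous_const.
  - apply (continuous_comp (fun u => cos u / cos t1) acos).
    + apply (continuous_mult (K:=R_AbsRing) (fun u => cos u) (fun _ => / cos t1)).
      apply continuous_cos. apply continuous_const.
    + apply acos_cont.
Qed.

Lemma facts t1 u : 0 < t1 < PI/2 -> t1 <= u <= PI - t1 ->
  0 < sin u /\ 0 < sin t1 /\ 0 < cos t1 < 1 /\ - cos t1 <= cos u <= cos t1.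
Proof.
  intros Ht Hu. pose proof PI_RGT_0.
  split; [apply sin_gt_0; lra|]. split; [apply sin_gt_0; lra|].
  split; [split; [apply cos_gt_0; lra|]|].
  { rewrite <- cos_0. apply cos_decreasing_1; lra. }
  split.
  - rewrite <- Rtrigo_facts.cos_pi_minus.
    destruct (Req_dec u (PI - t1)) as [E|E]; [rewrite E; lra|].
    left; apply cos_decreasing_1; lra.
  - destruct (Req_dec u t1) as [E|E]; [rewrite E; lra|].
    left; apply cos_decreasing_1; lra.
Qed.

Lemma facts_strict t1 u : 0 < t1 < PI/2 -> t1 < u < PI - t1 ->
  - cos t1 < cos u < cos t1.
Proof.
  intros Ht Hu. pose proof PI_RGT_0. split.
  - rewrite <- Rtrigo_facts.cos_pi_minus. apply cos_decreasing_1; lra.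
  - apply cos_decreasing_1; lra.
Qed.

Lemma sqrtB t1 u : 0 < t1 < PI/2 -> t1 <= u <= PI - t1 ->
  sqrt (1 - (cos u / cos t1)²) = sin u * sqrt (1 - (sin t1)^2/(sin u)^2) / cos t1.
Proof.
  intros Ht Hu. destruct (facts t1 u Ht Hu) as (Hsu & Hst & [Hc0 Hc1] & Hcu).
  pose proof (sin2_cos2 u) as Pu. pose proof (sin2_cos2 t1) as Pt. unfold Rsqr in *.
  assert (HA : 0 <= 1 - (sin t1)^2/(sin u)^2).
  { replace (1 - (sin t1)^2/(sin u)^2) with ((sin u ^2 - sin t1 ^2)/ (sin u)^2)
      by (field; lra).
    apply Rmult_le_pos; [nra|]. apply Rlt_le, Rinv_0_lt_compat. nra. }
  apply Rsqr_inj.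
  - apply sqrt_pos.
  - apply Rmult_le_pos; [apply Rmult_le_pos; [lra|apply sqrt_pos]|].
    apply Rlt_le, Rinv_0_lt_compat; lra.
  - rewrite Rsqr_sqrt.
    + unfold Rsqr.
      replace (sin u * sqrt (1 - sin t1 ^ 2 / sin u ^ 2) / cos t1 *
        (sin u * sqrt (1 - sin t1 ^ 2 / sin u ^ 2) / cos t1)) with
        (sin u * sin u * (sqrt (1 - sin t1 ^ 2 / sin u ^ 2) * sqrt (1 - sin t1 ^ 2 / sin u ^ 2)) / (cos t1 * cos t1)) by (field; lra).
      rewrite sqrt_sqrt by lra. field_simplify; try lra. apply f_equal2; [nra|reflexivity].
    + unfold Rsqr. replace (1 - cos u / cos t1 * (cos u / cos t1)) with
        ((cos t1 * cos t1 - cos u * cos u) / (cos t1 * cos t1)) by (field; lra).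
      apply Rmult_le_pos; [nra|]. apply Rlt_le, Rinv_0_lt_compat. nra.
Qed.

Lemma hh_deriv t1 K u : 0 < t1 < PI/2 -> t1 < u < PI - t1 ->
  derivable_pt_lim (hh t1 K) u
   ((sin t1)^2 / ((sin u)^2 * sqrt (1 - (sin t1)^2/(sin u)^2)) * (1 - (u+K) * cos u / sin u)).
Proof.
  intros Ht Hu.
  assert (Hu' : t1 <= u <= PI - t1) by lra.
  destruct (facts t1 u Ht Hu') as (Hsu & Hst & [Hc0 Hc1] & _).
  pose proof (facts_strict t1 u Ht Hu) as Hcu.
  pose proof (sin2_cos2 u) as Pu. pose proof (sin2_cos2 t1) as Pt. unfold Rsqr in Pu, Pt.
  set (s := sin t1). set (c := cos t1). fold s in Pt, Hst. fold c in Pt, Hc0, Hc1, Hcu.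
  set (G := sqrt (1 - s^2/(sin u)^2)).
  assert (HA : 0 < 1 - s^2/(sin u)^2).
  { replace (1 - s^2/(sin u)^2) with ((sin u ^2 - s ^2)/ (sin u)^2) by (field; lra).
    apply Rdiv_lt_0_compat; nra. }
  assert (HG : 0 < G) by (apply sqrt_lt_R0; auto).
  assert (HGG : G * G = 1 - s^2/(sin u)^2) by (apply sqrt_sqrt; lra).
  assert (HB : sqrt (1 - (cos u / c)²) = sin u * G / c) by (apply sqrtB; auto).
  assert (Hx : -1 < cos u / c < 1).
  { split; [apply (Rmult_lt_reg_r c); [lra|]; field_simplify; lra|].
    apply (Rmult_lt_reg_r c); [lra|]; field_simplify; lra. }
  assert (H1 : is_derive (fun u => -(u+K) * sqrt (1 - s^2/(sin u)^2) + K) u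
                 (-G - (u+K) * (s^2 * cos u / ((sin u)^3 * G)))).
  { auto_derive.
    - repeat split; try lra. intro. nra.
      replace (1 + - (s * (s * 1) * / (sin u * (sin u * 1)))) with (1 - s^2/(sin u)^2) by (field; lra). auto.
    - replace (1 + - (s * (s * 1) * / (sin u * (sin u * 1)))) with (1 - s^2/(sin u)^2) by (field; lra).
      fold G. field. lra. }
  assert (H2 : is_derive (fun u => acos (cos u / c)) u ((- sin u / c) * (-1 / sqrt (1 - (cos u / c)²)))).
  { apply (is_derive_comp acos (fun u => cos u / c)).
    - apply is_derive_Reals.
      apply (derive_pt_eq_1 acos _ _ (derivable_pt_acos _ Hx)).
      apply derive_pt_acos.
    - auto_derive. auto. field. lra. }
  apply is_derive_Reals.
  pose proof (is_derive_plus _ _ _ _ _ H1 H2) as H3.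
  unfold hh. fold s c.
  replace (s ^ 2 / (sin u ^ 2 * G) * (1 - (u + K) * cos u / sin u)) with
    (plus (-G - (u+K) * (s^2 * cos u / ((sin u)^3 * G))) ((- sin u / c) * (-1 / sqrt (1 - (cos u / c)²)))).
  exact H3.
  unfold plus; simpl. rewrite HB.
  replace (-G) with (-(G*G)/G) by (field; lra). rewrite HGG. field. lra.
Qed.

Definition TT t1 K u :=
  (sin t1)^2 / ((sin u)^2 * sqrt (1 - (sin t1)^2/(sin u)^2)) * (1 - (u+K) * cos u / sin u).

Lemma pref_pos t1 u : 0 < t1 < PI/2 -> t1 < u < PI - t1 ->
  0 < (sin t1)^2 / ((sin u)^2 * sqrt (1 - (sin t1)^2/(sin u)^2)).
Proof.
  intros Ht Hu.
  assert (Hu' : t1 <= u <= PI - t1) by lra.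
  destruct (facts t1 u Ht Hu') as (Hsu & Hst & [Hc0 Hc1] & _).
  pose proof (facts_strict t1 u Ht Hu) as Hcu.
  pose proof (sin2_cos2 u) as Pu. pose proof (sin2_cos2 t1) as Pt. unfold Rsqr in Pu, Pt.
  assert (HA : 0 < 1 - (sin t1)^2/(sin u)^2).
  { replace (1 - (sin t1)^2/(sin u)^2) with ((sin u ^2 - sin t1 ^2)/ (sin u)^2) by (field; lra).
    apply Rdiv_lt_0_compat; nra. }
  assert (HG : 0 < sqrt (1 - (sin t1)^2/(sin u)^2)) by (apply sqrt_lt_R0; auto).
  apply Rdiv_lt_0_compat. nra. apply Rmult_lt_0_compat; nra.
Qed.

Lemma TT_pos t1 K uk u : 0 < t1 < PI/2 -> 0 <= K -> 0 <= uk -> uk < PI/2 ->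
  tan uk = uk + K -> t1 < u < PI - t1 -> uk < u -> 0 < TT t1 K u.
Proof.
  intros Ht HK Hk0 Hk1 Hkey Hu Hlt. unfold TT.
  pose proof (pref_pos t1 u Ht Hu).
  assert (Hu' : t1 <= u <= PI - t1) by lra.
  destruct (facts t1 u Ht Hu') as (Hsu & _).
  pose proof PI_RGT_0.
  apply Rmult_lt_0_compat; auto.
  destruct (Rlt_le_dec u (PI/2)) as [Hl|Hl].
  - assert (Hcu : 0 < cos u) by (apply cos_gt_0; lra).
    pose proof (F_incr uk u Hk0 Hlt Hl) as HF.
    assert (Ht2 : u + K < sin u / cos u) by (rewrite Hkey in HF; unfold tan in HF; lra).
    assert (Ht3 : (u + K) * cos u < sin u).
    { apply (Rmult_lt_compat_r (cos u)) in Ht2; auto.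
      replace (sin u / cos u * cos u) with (sin u) in Ht2 by (field; lra). lra. }
    assert ((u + K) * cos u / sin u < 1).
    { apply (Rmult_lt_reg_r (sin u)); auto. field_simplify; lra. }
    lra.
  - assert (Hcu : cos u <= 0) by (apply cos_le_0; lra).
    assert ((u + K) * cos u / sin u <= 0).
    { unfold Rdiv. apply Rmult_le_0_r. nra. apply Rlt_le, Rinv_0_lt_compat; auto. }
    lra.
Qed.

Lemma TT_neg t1 K uk u : 0 < t1 < PI/2 -> 0 <= K -> uk < PI/2 ->
  tan uk = uk + K -> t1 < u < uk -> TT t1 K u < 0.
Proof.
  intros Ht HK Hk1 Hkey Hu. unfold TT.
  pose proof PI_RGT_0.
  assert (Hu0 : t1 < u < PI - t1) by lra.
  pose proof (pref_pos t1 u Ht Hu0).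
  assert (Hu' : t1 <= u <= PI - t1) by lra.
  destruct (facts t1 u Ht Hu') as (Hsu & _).
  assert (Hcu : 0 < cos u) by (apply cos_gt_0; lra).
  assert (HF : tan u - u < tan uk - uk) by (apply F_incr; lra).
  assert (Ht2 : sin u / cos u < u + K) by (rewrite Hkey in HF; unfold tan in HF; lra).
  assert (Ht3 : sin u < (u + K) * cos u).
  { apply (Rmult_lt_compat_r (cos u)) in Ht2; auto.
    replace (sin u / cos u * cos u) with (sin u) in Ht2 by (field; lra). lra. }
  assert (1 < (u + K) * cos u / sin u).
  { apply (Rmult_lt_reg_r (sin u)); auto. field_simplify; lra. }
  apply Rmult_pos_neg; auto. lra.
Qed.

Theorem lemma5p14 (theta1 : R) (k : nat) (eta_k : R) :
  0 < theta1 < PI / 2 ->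
  INR k * PI <= eta_k < INR k * PI + PI / 2 ->
  tan eta_k = eta_k ->
  (forall x, INR k * PI <= x < INR k * PI + PI / 2 -> tan x = x -> x = eta_k) ->
  Phi theta1 k (theta1 + INR k * PI) = INR k * PI /\
  Phi theta1 k ((INR k + 1) * PI - theta1) = (INR k + 1) * PI /\
  (theta1 < eta_k - INR k * PI ->
     (forall x y, theta1 + INR k * PI <= x -> x < y -> y <= eta_k ->
        Phi theta1 k y < Phi theta1 k x) /\
     0 <= Phi theta1 k eta_k /\
     (forall x y, eta_k <= x -> x < y -> y <= (INR k + 1) * PI - theta1 ->
        Phi theta1 k x < Phi theta1 k y)) /\
  (eta_k - INR k * PI <= theta1 ->
     forall x y, Ik theta1 k x -> Ik theta1 k y -> x < y ->
        Phi theta1 k x < Phi theta1 k y).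
Proof.
  intros Ht Hek Htan _.
  pose proof PI_RGT_0 as HPI.
  assert (HK : 0 <= INR k * PI) by (apply Rmult_le_pos; [apply pos_INR|lra]).
  set (K := INR k * PI) in *.
  set (uk := eta_k - K).
  assert (Huk : 0 <= uk < PI/2) by (unfold uk; lra).
  assert (Hcuk : 0 < cos uk) by (apply cos_gt_0; lra).
  assert (Hkey : tan uk = uk + K).
  { rewrite <- (tan_k k uk) by lra. fold K. replace (uk + K) with eta_k by (unfold uk; ring).
    auto. }
  assert (Hcont : forall u, theta1 <= u <= PI - theta1 -> continuity_pt (hh theta1 K) u).
  { intros u Hu. apply hh_cont. destruct (facts theta1 u Ht Hu) as (Hs & _). lra. }
  assert (Hder : forall u, theta1 < u < PI - theta1 ->
     derivable_pt_lim (hh theta1 K) u (TT theta1 K u)).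
  { intros u Hu. apply hh_deriv; auto. }
  assert (Hinc : forall x y, uk <= x -> theta1 <= x -> x < y -> y <= PI - theta1 ->
            hh theta1 K x < hh theta1 K y).
  { intros x y H1 H2 H3 H4.
    apply (incr_lemma (hh theta1 K) (TT theta1 K) x (PI - theta1)); try lra.
    - intros u Hu. apply Hder. lra.
    - intros u Hu. apply (TT_pos theta1 K uk u); auto; lra.
    - intros u Hu. apply Hcont. lra. }
  assert (HK1 : (INR k + 1) * PI = K + PI) by (unfold K; ring).
  split; [|split; [|split]].
  - rewrite Phi_hh. fold K. replace (theta1 + K - K) with theta1 by ring.
    unfold hh. replace (1 - sin theta1 ^ 2 / sin theta1 ^ 2) with 0.
    + rewrite sqrt_0. replace (cos theta1 / cos theta1) with 1.
      * rewrite acos_1. ring.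
      * destruct (facts theta1 theta1 Ht) as (_ & _ & [Hc _] & _); [lra|]. field. lra.
    + destruct (facts theta1 theta1 Ht) as (_ & Hs & _); [lra|]. field. lra.
  - rewrite Phi_hh. fold K. replace ((INR k + 1) * PI - theta1 - K) with (PI - theta1)
      by (unfold K; ring).
    unfold hh. rewrite sin_PI_x, Rtrigo_facts.cos_pi_minus.
    replace (1 - sin theta1 ^ 2 / sin theta1 ^ 2) with 0.
    + rewrite sqrt_0. replace (- cos theta1 / cos theta1) with (- (1)).
      * rewrite acos_opp, acos_1. unfold K. ring.
      * destruct (facts theta1 theta1 Ht) as (_ & _ & [Hc _] & _); [lra|]. field. lra.
    + destruct (facts theta1 theta1 Ht) as (_ & Hs & _); [lra|]. field. lra.
  - intros H1. split; [|split].
    + intros x y Hx Hxy Hy. rewrite !Phi_hh. fold K.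
      enough (- hh theta1 K (x - K) < - hh theta1 K (y - K)) by lra.
      apply (incr_lemma (fun u => - hh theta1 K u) (fun u => - TT theta1 K u) theta1 uk);
        try (unfold uk; lra).
      * intros u Hu. apply (derivable_pt_lim_opp (hh theta1 K)). apply Hder. lra.
      * intros u Hu. assert (TT theta1 K u < 0) by (apply (TT_neg theta1 K uk u); auto; lra).
        lra.
      * intros u Hu. apply (continuity_pt_opp (hh theta1 K)). apply Hcont. lra.
    + rewrite Phi_hh. fold K. fold uk.
      assert (Hu0 : theta1 < uk < PI - theta1) by lra.
      assert (Hu' : theta1 <= uk <= PI - theta1) by lra.
      destruct (facts theta1 uk Ht Hu') as (Hsu & Hst & [Hc0 Hc1] & _).
      pose proof (facts_strict theta1 uk Ht Hu0) as Hcu.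
      set (x := cos uk / cos theta1).
      assert (Hx0 : 0 < x) by (apply Rdiv_lt_0_compat; lra).
      assert (Hx1 : x < 1).
      { apply (Rmult_lt_reg_r (cos theta1)); auto. unfold x. field_simplify; lra. }
      assert (Hxc : cos uk < x).
      { apply (Rmult_lt_reg_r (cos theta1)); auto. unfold x. field_simplify; nra. }
      set (v := acos x).
      assert (Hv : 0 <= v <= PI) by apply acos_bound.
      assert (Hcv : cos v = x) by (apply cos_acos; lra).
      assert (Hvu : v <= uk).
      { destruct (Rle_dec v uk) as [?|Hn]; auto. exfalso.
        assert (cos v < cos uk) by (apply cos_decreasing_1; lra). lra. }
      set (G := sqrt (1 - (sin theta1)^2/(sin uk)^2)).
      assert (Htv : tan v = tan uk * G).
      { unfold v. rewrite tan_acos by lra. unfold x at 1. rewrite sqrtB by lra.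
        fold G. unfold x, tan. field. lra. }
      assert (HF : tan v - v <= tan uk - uk).
      { destruct (Req_dec v uk) as [E|E]; [rewrite E; lra|].
        left. apply F_incr; lra. }
      unfold hh. fold G. fold x. fold v.
      replace (- (uk + K) * G) with (- tan v) by (rewrite Htv, Hkey; ring).
      lra.
    + intros x y Hx Hxy Hy. rewrite !Phi_hh. fold K.
      apply Hinc; unfold uk in *; lra.
  - intros H2 x y Hx Hy Hxy. unfold Ik in Hx, Hy. fold K in Hx, Hy. rewrite !Phi_hh. fold K.
    apply Hinc; unfold uk in *; lra.
Qed.
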